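(* Let $A\in SL_3(\mathfrak{o})$. Then there exist $y_1,y_2,y_3\in Y(\mathfrak{o})$, $d\in D(3)$, $u\in U(3)$ and $C\in\Gamma_\infty(3)$ such that $$A=\varphi_2(y_1^{-1})\,\varphi_1(y_2^{-1})\,\varphi_2(y_3^{-1})\,d\,u\,C.$$
   Context: Let $\omega=e^{2\pi i/3}$, $\mathfrak{o}=\mathbb{Z}[\omega]$ (a PID), $\mathfrak{o}^\times=\{\pm1,\pm\omega,\pm\omega^2\}$. Fix a set of representatives of the nonzero elements of $\mathfrak{o}$ modulo multiplication by units (e.g. the $z\neq0$ with $0\le\arg z<\pi/3$); ''$c\in(\mathfrak{o}-\{0\})/\mathfrak{o}^\times$'' means $c$ is one of these representatives. For each nonzero $c$ fix a set of representatives of $\mathfrak{o}/c\mathfrak{o}$; ''$a\in\mathfrak{o}/c\mathfrak{o}$'' means $a$ belongs to this set. $Y(\mathfrak{o})=\{\begin{pmatrix}a&b\\c&d\end{pmatrix}\in SL_2(\mathfrak{o}) : c\in(\mathfrak{o}-\{0\})/\mathfrak{o}^\times,\ a\in\mathfrak{o}/c\mathfrak{o}\}\cup\{I_2\}$. $\Gamma(3)=\{A\in SL_3(\mathfrak{o}):A\equiv I_3\pmod{3\mathfrak{o}}\}$ (entrywise) and $\Gamma_\infty(3)$ is its subgroup of upper triangular unipotent matrices. $D(3)$ is the set of diagonal matrices $\mathrm{diag}(i,j,k)$ with $i,j,k\in\mathfrak{o}$, $ijk=1$. $U(3)$ is the set of matrices $\begin{pmatrix}1&\alpha&\beta\\&1&\gamma\\&&1\end{pmatrix}$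 with $\alpha,\beta,\gamma\in\{0,1,2\}+\{0,1,2\}\omega$. For $y=\begin{pmatrix}a&b\\c&d\end{pmatrix}\in SL_2(\mathfrak{o})$, $\varphi_1(y)=\begin{pmatrix}a&b&0\\c&d&0\\0&0&1\end{pmatrix}$ and $\varphi_2(y)=\begin{pmatrix}1&0&0\\0&a&b\\0&c&d\end{pmatrix}$. *)

(* Defs.v *)
(* the Eisenstein integers o = Z[omega] are realised as a
   subring of the algebraic complex numbers algC. *)
From HB Require Import structures.
From mathcomp Require Import all_boot all_order all_algebra all_field.
Set Implicit Arguments. Unset Strict Implicit. Unset Printing Implicit Defensive.
Import Order.TTheory GRing.Theory Num.Theory.
Local Open Scope ring_scope.

(* omega = e^{2 pi i/3} = (-1 + i sqrt 3)/2 *)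
Definition omega : algC := (-1 + 'i * sqrtC 3%:R) / 2%:R.

Definition in_o (z : algC) : Prop := exists a b : int, z = a%:~R + b%:~R * omega.

Definition unit_o (u : algC) : Prop := in_o u /\ exists v, in_o v /\ u * v = 1.

Definition dvd_o (c z : algC) : Prop := exists q, in_o q /\ z = q * c.

Definition unit_rep_system (R : algC -> Prop) : Prop :=
  (forall z, R z -> in_o z /\ z != 0) /\
  (forall z, in_o z -> z != 0 -> exists! r, R r /\ exists u, unit_o u /\ r = u * z).

Definition residue_rep_system (c : algC) (S : algC -> Prop) : Prop :=
  (forall a, S a -> in_o a) /\
  (forall z, in_o z -> exists! a, S a /\ dvd_o c (z - a)).

Definition inSL2 (y : 'M[algC]_2) : Prop := (forall i j, in_o (y i j)) /\ \det y = 1.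
Definition inSL3 (A : 'M[algC]_3) : Prop := (forall i j, in_o (A i j)) /\ \det A = 1.

Definition i0_2 : 'I_2 := @Ordinal 2 0 isT.
Definition i1_2 : 'I_2 := @Ordinal 2 1 isT.

(* Y(o), relative to the chosen representatives R (for c) and S c (for a mod c) *)
Definition Yset (R : algC -> Prop) (S : algC -> algC -> Prop) (y : 'M[algC]_2) : Prop :=
  y = 1%:M \/ (inSL2 y /\ R (y i1_2 i0_2) /\ S (y i1_2 i0_2) (y i0_2 i0_2)).

Definition phi1 (y : 'M[algC]_2) : 'M[algC]_3 :=
  \matrix_(i < 3, j < 3)
    if ((i < 2) && (j < 2))%N then y (inord i) (inord j) else (i == j)%:R.
Definition phi2 (y : 'M[algC]_2) : 'M[algC]_3 :=
  \matrix_(i < 3, j < 3)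
    if ((0 < i) && (0 < j))%N then y (inord i.-1) (inord j.-1) else (i == j)%:R.

Definition upper_unipotent (C : 'M[algC]_3) : Prop :=
  forall i j : 'I_3, (j <= i)%N -> C i j = (i == j)%:R.

Definition Gamma3 (C : 'M[algC]_3) : Prop :=
  inSL3 C /\ forall i j, dvd_o 3%:R (C i j - (i == j)%:R).
Definition GammaInf3 (C : 'M[algC]_3) : Prop := Gamma3 C /\ upper_unipotent C.

Definition D3 (d : 'M[algC]_3) : Prop :=
  exists i j k : algC, [/\ in_o i, in_o j, in_o k, i * j * k = 1 &
    d = \matrix_(r < 3, s < 3)
          (if r == s then (if r == 0 :> nat then i else if r == 1 :> nat then j else k)
           else 0)].

Definition small_o (z : algC) : Prop :=
  exists a b : nat, [/\ (a <= 2)%N, (b <= 2)%N & z = a%:R + b%:R * omega].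

Definition U3 (u : 'M[algC]_3) : Prop :=
  upper_unipotent u /\ forall i j : 'I_3, (i < j)%N -> small_o (u i j).

(* Main.v *)
Set Warnings "-notation-overridden,-ambiguous-paths".
Require Import Defs.
From HB Require Import structures.
From mathcomp Require Import all_boot all_order all_algebra all_field.
Import Order.TTheory GRing.Theory Num.Theory.
Local Open Scope ring_scope.
From mathcomp Require Import ring zify.

Lemma omega2 : omega ^+ 2 = -1 - omega.
Proof.
rewrite /omega; set s := sqrtC _; set I := 'i.
have hs : s ^+ 2 = 3%:R by rewrite /s sqrtCK.
have hI : I ^+ 2 = -1 by rewrite /I sqrCi.
have h2 : (2%:R : algC) != 0 by rewrite pnatr_eq0.
apply/eqP; rewrite -subr_eq0; apply/eqP.
have -> : ((-1 + I * s) / 2%:R) ^+ 2 - (-1 - (-1 + I * s) / 2%:R) = (I^+2 * s^+2 + 3%:R) / 4%:R.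
  by field.
by rewrite hI hs mulN1r addNr mul0r.
Qed.

Definition emb (a b : int) : algC := a%:~R + b%:~R * omega.

Lemma embM a b c d : emb a b * emb c d = emb (a*c - b*d) (a*d + b*c - b*d).
Proof.
rewrite /emb !(intrD, intrM, intrN, intrB).
have h := omega2.
transitivity (a%:~R * c%:~R + (a%:~R * d%:~R + b%:~R * c%:~R) * omega + b%:~R * d%:~R * omega^+2 :> algC).
  by ring.
rewrite h; ring.
Qed.

Lemma embD a b c d : emb a b + emb c d = emb (a + c) (b + d).
Proof. rewrite /emb !intrD; ring. Qed.
Lemma embN a b : - emb a b = emb (- a) (- b).
Proof. rewrite /emb !intrN; ring. Qed.
Lemma emb0 : emb 0 0 = 0.
Proof. by rewrite /emb !mulr0z mul0r addr0. Qed.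
Lemma emb1 : emb 1 0 = 1.
Proof. by rewrite /emb mulr0z mul0r addr0. Qed.

Lemma in_oE z : in_o z <-> exists a b, z = emb a b.
Proof. by []. Qed.
Lemma in_o_emb a b : in_o (emb a b).
Proof. by exists a, b. Qed.
Lemma in_o0 : in_o 0. Proof. by rewrite -emb0; apply: in_o_emb. Qed.
Lemma in_o1 : in_o 1. Proof. by rewrite -emb1; apply: in_o_emb. Qed.
Lemma in_oD x y : in_o x -> in_o y -> in_o (x + y).
Proof. move=> [a [b ->]] [c [d ->]]; rewrite embD; apply: in_o_emb. Qed.
Lemma in_oN x : in_o x -> in_o (- x).
Proof. move=> [a [b ->]]; rewrite embN; apply: in_o_emb. Qed.
Lemma in_oB x y : in_o x -> in_o y -> in_o (x - y).
Proof. by move=> hx hy; apply: in_oD => //; apply: in_oN. Qed.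
Lemma in_oM x y : in_o x -> in_o y -> in_o (x * y).
Proof. move=> [a [b ->]] [c [d ->]]; rewrite embM; apply: in_o_emb. Qed.
Lemma in_onat n : in_o n%:R.
Proof. by exists n%:Z, 0; rewrite /emb mulr0z mul0r addr0. Qed.

Definition Nm (a b : int) : int := a*a - a*b + b*b.

Lemma Nm_mul a b c d : Nm (a*c - b*d) (a*d + b*c - b*d) = Nm a b * Nm c d.
Proof. rewrite /Nm; ring. Qed.

Lemma bnd (N n e f : int) : (0 < n)%R -> N * n = e*e - e*f + f*f ->
  (- n <= 2 * e < n)%R -> (- n <= 2 * f < n)%R -> (N < n)%R.
Proof.
move=> hn hN he hf.
have h1 : (4 * (e*e) <= n * n)%R by nia.
have h2 : (4 * (f*f) <= n * n)%R by nia.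
have h3 : (- (4 * (e * f)) <= n * n)%R by nia.
have h4 : (4 * (N * n) <= 3 * (n * n))%R by lia.
nia.
Qed.

Lemma euclid a b c d : (c, d) != (0, 0) ->
  exists q1 q2 r1 r2, emb a b = emb q1 q2 * emb c d + emb r1 r2 /\ (Nm r1 r2 < Nm c d)%R.
Proof.
move=> hcd.
have hn : (0 < Nm c d)%R.
  rewrite /Nm; case/boolP: (c == 0) hcd => [/eqP -> | hc] hcd.
    have hd : d != 0 by apply: contraNneq hcd => ->.
    nia.
  nia.
set n := Nm c d.
set u := a*c - a*d + b*d.
set v := b*c - a*d.
set q1 := ((2*u + n) %/ (2*n))%Z.
set q2 := ((2*v + n) %/ (2*n))%Z.
set r1 := a - (q1*c - q2*d).
set r2 := b - (q1*d + q2*c - q2*d).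
exists q1, q2, r1, r2; split.
  by rewrite embM embD /r1 /r2; congr emb; ring.
have key : Nm r1 r2 * n = Nm (u - q1 * n) (v - q2 * n).
  by rewrite /r1 /r2 /u /v /n /Nm; ring.
have e1 : (- n <= 2 * (u - q1 * n) < n)%R by rewrite /q1; lia.
have e2 : (- n <= 2 * (v - q2 * n) < n)%R by rewrite /q2; lia.
have := @bnd (Nm r1 r2) n (u - q1*n) (v - q2*n); apply => //.
Qed.

Lemma Nm_ge0 a b : (0 <= Nm a b)%R.
Proof. rewrite /Nm; nia. Qed.

Lemma bezout n : forall a b c d, (`|Nm c d| < n)%N ->
  exists g qx qy s t, [/\ in_o qx, in_o qy, in_o s, in_o t &
   [/\ emb a b = qx * g, emb c d = qy * g & s * emb a b + t * emb c d = g]].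
Proof.
elim: n => [//|n IH] a b c d hN.
case/boolP: ((c, d) == (0, 0)) => [/eqP [-> ->] | hcd].
  exists (emb a b), 1, 0, 1, 0; split; try exact: in_o0; try exact: in_o1.
  by rewrite emb0 mul1r mul0r mul0r addr0.
have [q1 [q2 [r1 [r2 [E hr]]]]] := euclid a b c d hcd.
have hr' : (`|Nm r1 r2| < n)%N.
  have := Nm_ge0 r1 r2; have := Nm_ge0 c d; lia.
have [g [qx [qy [s [t [hqx hqy hs ht [E1 E2 E3]]]]]]] := IH c d r1 r2 hr'.
exists g, (emb q1 q2 * qx + qy), qx, t, (s - t * emb q1 q2); split => //.
- by apply: in_oD => //; apply: in_oM => //; apply: in_o_emb.
- by apply: in_oB => //; apply: in_oM => //; apply: in_o_emb.
- rewrite E E1 E2; split; [ring | by [] | ].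
  rewrite -E1 -E2 -E3; ring.
Qed.
Definition mk3 (a b c d e f g h k : algC) : 'M[algC]_3 :=
  \matrix_(i < 3, j < 3) nth 0 (nth [::] [:: [:: a; b; c]; [:: d; e; f]; [:: g; h; k]] i) j.
Definition o0 : 'I_3 := @Ordinal 3 0 isT.
Definition o1 : 'I_3 := @Ordinal 3 1 isT.
Definition o2 : 'I_3 := @Ordinal 3 2 isT.

Lemma mk3E (M : 'M[algC]_3) : M = mk3 (M o0 o0) (M o0 o1) (M o0 o2) (M o1 o0) (M o1 o1) (M o1 o2) (M o2 o0) (M o2 o1) (M o2 o2).
Proof.
apply/matrixP=> i j; rewrite mxE.
case: i => [[|[|[|i]]] Hi] //; case: j => [[|[|[|j]]] Hj] //=; congr (M _ _); exact: val_inj.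
Qed.

Lemma mul_mk3 a b c d e f g h k a' b' c' d' e' f' g' h' k' :
  mk3 a b c d e f g h k *m mk3 a' b' c' d' e' f' g' h' k' =
  mk3 (a*a' + b*d' + c*g') (a*b' + b*e' + c*h') (a*c' + b*f' + c*k')
      (d*a' + e*d' + f*g') (d*b' + e*e' + f*h') (d*c' + e*f' + f*k')
      (g*a' + h*d' + k*g') (g*b' + h*e' + k*h') (g*c' + h*f' + k*k').
Proof.
apply/matrixP=> i j; rewrite !mxE !big_ord_recr big_ord0 /= !mxE /=.
case: i => [[|[|[|i]]] Hi] //; case: j => [[|[|[|j]]] Hj] //=; ring.
Qed.

Lemma det2 (M : 'M[algC]_2) : \det M = M 0 0 * M 1 1 - M 0 1 * M 1 0.
Proof.
rewrite (expand_det_row _ 0) !big_ord_recr big_ord0 /= /cofactor !det_mx11 !mxE /=.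
rewrite add0r expr0 expr1 mul1r mulN1r mulrN.
have -> : lift 0 (0 : 'I_1) = 1 :> 'I_2 by apply/val_inj.
have -> : lift (widen_ord (leqnSn 1) ord_max) (0 : 'I_1) = 1 :> 'I_2 by apply/val_inj.
have -> : (widen_ord (leqnSn 1) ord_max) = 0 :> 'I_2 by apply/val_inj.
have -> : lift ord_max (0 : 'I_1) = 0 :> 'I_2 by apply/val_inj.
have -> : ord_max = 1 :> 'I_2 by apply/val_inj.
by [].
Qed.

Lemma det_mk3 a b c d e f g h k :
  \det (mk3 a b c d e f g h k) = a*(e*k - f*h) - b*(d*k - f*g) + c*(d*h - e*g).
Proof.
rewrite (expand_det_row _ 0) !big_ord_recr big_ord0 /= /cofactor !det2 !mxE /=.
ring.
Qed.

Lemma inord0_2 : inord 0 = i0_2. Proof. by apply/val_inj; rewrite /= inordK. Qed.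
Lemma inord1_2 : inord 1 = i1_2. Proof. by apply/val_inj; rewrite /= inordK. Qed.

Lemma w0 : widen_ord (leqnSn 2) (widen_ord (leqnSn 1) ord_max) = o0. Proof. by apply/val_inj. Qed.
Lemma w1 : widen_ord (leqnSn 2) ord_max = o1. Proof. by apply/val_inj. Qed.
Lemma w2 : (@ord_max 2) = o2. Proof. by apply/val_inj. Qed.
Ltac expand3 := rewrite mxE !big_ord_recr big_ord0 /= !mxE /= ?inord0_2 ?inord1_2 w0 w1 w2.

Lemma phi2_r0 y (M : 'M[algC]_3) j : (phi2 y *m M) o0 j = M o0 j.
Proof. expand3; ring. Qed.
Lemma phi2_r1 y (M : 'M[algC]_3) j : (phi2 y *m M) o1 j = y i0_2 i0_2 * M o1 j + y i0_2 i1_2 * M o2 j.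
Proof. expand3; ring. Qed.
Lemma phi2_r2 y (M : 'M[algC]_3) j : (phi2 y *m M) o2 j = y i1_2 i0_2 * M o1 j + y i1_2 i1_2 * M o2 j.
Proof. expand3; ring. Qed.
Lemma phi1_r0 y (M : 'M[algC]_3) j : (phi1 y *m M) o0 j = y i0_2 i0_2 * M o0 j + y i0_2 i1_2 * M o1 j.
Proof. expand3; ring. Qed.
Lemma phi1_r1 y (M : 'M[algC]_3) j : (phi1 y *m M) o1 j = y i1_2 i0_2 * M o0 j + y i1_2 i1_2 * M o1 j.
Proof. expand3; ring. Qed.
Lemma phi1_r2 y (M : 'M[algC]_3) j : (phi1 y *m M) o2 j = M o2 j.
Proof. expand3; ring. Qed.

Lemma mul2 (a b : 'M[algC]_2) i j : (a *m b) i j = a i i0_2 * b i0_2 j + a i i1_2 * b i1_2 j.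
Proof.
rewrite mxE !big_ord_recr big_ord0 /= add0r.
have -> : widen_ord (leqnSn 1) ord_max = i0_2 by apply/val_inj.
by have -> : (@ord_max 1) = i1_2 by apply/val_inj.
Qed.

Lemma phi2_mk y : phi2 y = mk3 1 0 0 0 (y i0_2 i0_2) (y i0_2 i1_2) 0 (y i1_2 i0_2) (y i1_2 i1_2).
Proof.
apply/matrixP=> i j; rewrite !mxE.
by case: i => [[|[|[|i]]] Hi] //; case: j => [[|[|[|j]]] Hj] //=; rewrite ?inord0_2 ?inord1_2.
Qed.
Lemma phi1_mk y : phi1 y = mk3 (y i0_2 i0_2) (y i0_2 i1_2) 0 (y i1_2 i0_2) (y i1_2 i1_2) 0 0 0 1.
Proof.
apply/matrixP=> i j; rewrite !mxE.
by case: i => [[|[|[|i]]] Hi] //; case: j => [[|[|[|j]]] Hj] //=; rewrite ?inord0_2 ?inord1_2.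
Qed.
Lemma one3 : (1%:M : 'M[algC]_3) = mk3 1 0 0 0 1 0 0 0 1.
Proof.
apply/matrixP=> i j; rewrite !mxE.
by case: i => [[|[|[|i]]] Hi] //; case: j => [[|[|[|j]]] Hj] //=.
Qed.
Lemma one2 : (1%:M : 'M[algC]_2) i0_2 i0_2 = 1 /\ (1%:M : 'M[algC]_2) i0_2 i1_2 = 0 /\
  (1%:M : 'M[algC]_2) i1_2 i0_2 = 0 /\ (1%:M : 'M[algC]_2) i1_2 i1_2 = 1.
Proof. by rewrite !mxE. Qed.

Lemma phi2M a b : phi2 (a *m b) = phi2 a *m phi2 b.
Proof. rewrite !phi2_mk mul_mk3 !mul2; congr mk3; ring. Qed.
Lemma phi1M a b : phi1 (a *m b) = phi1 a *m phi1 b.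
Proof. rewrite !phi1_mk mul_mk3 !mul2; congr mk3; ring. Qed.
Lemma phi2_1 : phi2 1%:M = 1%:M.
Proof. have [h1 [h2 [h3 h4]]] := one2; by rewrite phi2_mk h1 h2 h3 h4 one3. Qed.
Lemma phi1_1 : phi1 1%:M = 1%:M.
Proof. have [h1 [h2 [h3 h4]]] := one2; by rewrite phi1_mk h1 h2 h3 h4 one3. Qed.

Lemma unit_det1 (y : 'M[algC]_2) : \det y = 1 -> y \in unitmx.
Proof. by move=> h; rewrite unitmxE h unitr1. Qed.
Lemma phi2_inv y : \det y = 1 -> phi2 (invmx y) *m phi2 y = 1%:M.
Proof. by move=> h; rewrite -phi2M mulVmx ?phi2_1 // unit_det1. Qed.
Lemma phi1_inv y : \det y = 1 -> phi1 (invmx y) *m phi1 y = 1%:M.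
Proof. by move=> h; rewrite -phi1M mulVmx ?phi1_1 // unit_det1. Qed.

Lemma det2' (y : 'M[algC]_2) : \det y = y i0_2 i0_2 * y i1_2 i1_2 - y i0_2 i1_2 * y i1_2 i0_2.
Proof.
rewrite det2; have -> : (0 : 'I_2) = i0_2 by apply/val_inj.
by have -> : (1 : 'I_2) = i1_2 by apply/val_inj.
Qed.
Lemma det_phi2 y : \det (phi2 y) = \det y.
Proof. rewrite phi2_mk det_mk3 det2'; ring. Qed.
Lemma det_phi1 y : \det (phi1 y) = \det y.
Proof. rewrite phi1_mk det_mk3 det2'; ring. Qed.

Definition o_mx {n} (M : 'M[algC]_n) := forall i j, in_o (M i j).
Lemma o_mul n (M N : 'M[algC]_n) : o_mx M -> o_mx N -> o_mx (M *m N).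
Proof.
move=> hM hN i j; rewrite mxE; apply: (big_ind (fun x => in_o x)).
- exact: in_o0.
- exact: in_oD.
- by move=> k _; apply: in_oM.
Qed.
Lemma o_nat b : in_o (b%:R). Proof. exact: in_onat. Qed.
Lemma o_phi2 y : o_mx y -> o_mx (phi2 y).
Proof. by move=> h i j; rewrite mxE; case: ifP => _; [apply: h | apply: in_onat]. Qed.
Lemma o_phi1 y : o_mx y -> o_mx (phi1 y).
Proof. by move=> h i j; rewrite mxE; case: ifP => _; [apply: h | apply: in_onat]. Qed.

Definition mk2 (a b c d : algC) : 'M[algC]_2 :=
  \matrix_(i < 2, j < 2) nth 0 (nth [::] [:: [:: a; b]; [:: c; d]] i) j.

Lemma Yset_SL2 R S y : Yset R S y -> inSL2 y.
Proof.
case=> [-> | [h _]] //; split; last by rewrite det1.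
by move=> i j; rewrite mxE; apply: in_onat.
Qed.

Ltac o_auto := repeat first [assumption | apply: in_oB | apply: in_oD | apply: in_oM | apply: in_oN ].

Lemma kill R S (HR : unit_rep_system R) (HS : forall c, R c -> residue_rep_system c (S c)) x z :
  in_o x -> in_o z -> exists y, Yset R S y /\ y i1_2 i0_2 * x + y i1_2 i1_2 * z = 0.
Proof.
move=> hx hz.
case/boolP: (z == 0) => [/eqP -> | z0].
  by exists 1%:M; split; [left | rewrite !mxE /= mul0r mulr0 addr0].
case: hx => a [b ex]; case: hz => c [d ez].
have [g [qx [qz [s [t [hqx hqz hs ht [E1 E2 E3]]]]]]] := @bezout _ a b c d (ltnSn `|Nm c d|).
rewrite /emb -ex in E1 E3; rewrite /emb -ez in E2 E3.
have qz0 : qz != 0 by apply: contraNneq z0 => h; rewrite E2 h mul0r.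
have g0 : g != 0 by apply: contraNneq z0 => h; rewrite E2 h mulr0.
have hq : s * qx + t * qz = 1.
  apply: (mulIf g0); rewrite mul1r -[in RHS]E3 E1 E2; ring.
have [r [[Rr [u [[hu_o [v [hv_o huv]]] er]]] _]] := HR.2 qz hqz qz0.
have hva : in_o (v * - s) by apply: in_oM => //; apply: in_oN.
have [s0 [[Ss0 [k [hk ek]]] _]] := (HS r Rr).2 (v * - s) hva.
have hr : in_o r by case: (HR.1 r Rr).
pose y := mk2 (v * - s - k * r) (v * - t - k * (u * - qx)) r (u * - qx).
exists y; split.
  right; split; [split | split].
  - move=> i j; rewrite mxE.
    case: i => [[|[|i]] Hi] //; case: j => [[|[|j]] Hj] //=; o_auto.
  - rewrite det2' !mxE /= er.
    transitivity (u * v * (s * qx + t * qz)); first by ring.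
    by rewrite huv hq mul1r.
  - by rewrite mxE /=.
  - rewrite !mxE /=.
    suff -> : v * - s - k * r = s0 by [].
    by rewrite -ek; ring.
rewrite !mxE /= er E1 E2; ring.
Qed.

Lemma nat_abs (m : int) : (0 <= m)%R -> ((absz m)%:R : algC) = m%:~R.
Proof. move=> h. have -> : m = (absz m)%:Z by lia. by rewrite absz_nat. Qed.

Lemma small_in_o s : small_o s -> in_o s.
Proof. by case=> [a [b [_ _ ->]]]; apply: in_oD; [apply: in_onat | apply: in_oM; [apply: in_onat | exists 0, 1; rewrite /= mul1r add0r]]. Qed.

Lemma small_rep z : in_o z -> exists s, small_o s /\ exists q, in_o q /\ z - s = q * 3%:R.
Proof.
case=> a [b ->].
exists ((absz (a %% 3)%Z)%:R + (absz (b %% 3)%Z)%:R * omega); split.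
  by exists (absz (a %% 3)%Z), (absz (b %% 3)%Z); split => //; lia.
exists (emb (a %/ 3)%Z (b %/ 3)%Z); split; first exact: in_o_emb.
rewrite !nat_abs; try lia.
rewrite {1}(divz_eq a 3) {1}(divz_eq b 3) /emb !intrD !intrM.
have -> : (3%:~R : algC) = 3%:R by [].
ring.
Qed.

Ltac cases3 := let i := fresh "i" in let j := fresh "j" in let Hi := fresh "Hi" in let Hj := fresh "Hj" in
  move=> [[|[|[|i]]] Hi] [[|[|[|j]]] Hj] //=.

Lemma upper_dec (T : 'M[algC]_3) : o_mx T -> \det T = 1 -> T o1 o0 = 0 -> T o2 o0 = 0 -> T o2 o1 = 0 ->
  exists d u C, D3 d /\ U3 u /\ GammaInf3 C /\ T = d *m u *m C.
Proof.
move=> hT hdet h10 h20 h21.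
rewrite (mk3E T) det_mk3 h10 h20 h21 in hdet *.
have h0 := hT o0 o0; have h1 := hT o0 o1; have h2 := hT o0 o2.
have h4 := hT o1 o1; have h5 := hT o1 o2; have h8 := hT o2 o2.
move: (T o0 o0) (T o0 o1) (T o0 o2) (T o1 o1) (T o1 o2) (T o2 o2) h0 h1 h2 h4 h5 h8 hdet.
move=> t00 t01 t02 t11 t12 t22 h0 h1 h2 h4 h5 h8 hdet.
have {}hdet : t00 * t11 * t22 = 1 by rewrite -hdet; ring.
set n12 := t01 * (t11 * t22); set n13 := t02 * (t11 * t22); set n23 := t12 * (t00 * t22).
have hn12 : in_o n12 by o_auto.
have hn13 : in_o n13 by o_auto.
have hn23 : in_o n23 by o_auto.
have [a [sa [qa [hqa ea]]]] := small_rep _ hn12.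
have [c [sc [qc [hqc ec]]]] := small_rep _ hn23.
have ha := small_in_o _ sa; have hc := small_in_o _ sc.
have hw : in_o (n13 - a * n23 + a * c) by o_auto.
have [b [sb [qb [hqb eb]]]] := small_rep _ hw.
have hb := small_in_o _ sb.
exists (mk3 t00 0 0 0 t11 0 0 0 t22), (mk3 1 a b 0 1 c 0 0 1),
  (mk3 1 (n12 - a) (n13 - a * n23 + a * c - b) 0 1 (n23 - c) 0 0 1).
split; [|split; [|split]].
- exists t00, t11, t22; split => //.
  by apply/matrixP; cases3; rewrite !mxE.
- split; first by cases3; rewrite mxE.
  by cases3; rewrite mxE.
- split; [split; [split|] |].
  + cases3; rewrite mxE /=; first [exact: in_o0 | exact: in_o1 | o_auto].
  + rewrite det_mk3; ring.
  + cases3; rewrite mxE /=.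
    all: rewrite ?subr0 ?subrr.
    all: try by exists 0; split; [exact: in_o0 | rewrite mul0r].
    all: try by exists qa. all: try by exists qb. all: try by exists qc.
  + by cases3; rewrite mxE.
- rewrite !mul_mk3 /n12 /n13 /n23; congr mk3; try ring.
  all: match goal with |- ?l = _ => transitivity (l * (t00 * t11 * t22)); [by rewrite hdet mulr1 | ring] end.

Qed.

Theorem theorem2p10 (R : algC -> Prop) (S : algC -> algC -> Prop)
  (HR : unit_rep_system R)
  (HS : forall c, R c -> residue_rep_system c (S c))
  (A : 'M[algC]_3) (HA : inSL3 A) :
  exists (y1 y2 y3 : 'M[algC]_2) (d u C : 'M[algC]_3),
    Yset R S y1 /\ Yset R S y2 /\ Yset R S y3 /\
    D3 d /\ U3 u /\ GammaInf3 C /\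
    A = phi2 (invmx y1) *m phi1 (invmx y2) *m phi2 (invmx y3) *m d *m u *m C.
Proof.
case: HA => [HAo HAdet].
have [y1 [Y1 k1]] := @kill R S HR HS _ _ (HAo o1 o0) (HAo o2 o0).
have [oy1 d1] := Yset_SL2 _ _ _ Y1.
pose B1 := phi2 y1 *m A.
have oB1 : o_mx B1 := o_mul _ _ _ (o_phi2 _ oy1) HAo.
have z1 : B1 o2 o0 = 0 by rewrite /B1 phi2_r2.
have [y2 [Y2 k2]] := @kill R S HR HS _ _ (oB1 o0 o0) (oB1 o1 o0).
have [oy2 d2] := Yset_SL2 _ _ _ Y2.
pose B2 := phi1 y2 *m B1.
have oB2 : o_mx B2 := o_mul _ _ _ (o_phi1 _ oy2) oB1.
have z2 : B2 o1 o0 = 0 by rewrite /B2 phi1_r1.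
have z2' : B2 o2 o0 = 0 by rewrite /B2 phi1_r2.
have [y3 [Y3 k3]] := @kill R S HR HS _ _ (oB2 o1 o1) (oB2 o2 o1).
have [oy3 d3] := Yset_SL2 _ _ _ Y3.
pose T := phi2 y3 *m B2.
have oT : o_mx T := o_mul _ _ _ (o_phi2 _ oy3) oB2.
have t10 : T o1 o0 = 0 by rewrite /T phi2_r1 z2 z2' !mulr0 addr0.
have t20 : T o2 o0 = 0 by rewrite /T phi2_r2 z2 z2' !mulr0 addr0.
have t21 : T o2 o1 = 0 by rewrite /T phi2_r2.
have detT : \det T = 1.
  by rewrite /T /B2 /B1 !det_mulmx det_phi2 det_phi1 det_phi2 d1 d2 d3 HAdet !mul1r.
have [d [u [C [Hd [Hu [HC ET]]]]]] := upper_dec _ oT detT t10 t20 t21.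
exists y1, y2, y3, d, u, C; do 6 (split; first by []).
have -> : phi2 (invmx y1) *m phi1 (invmx y2) *m phi2 (invmx y3) *m d *m u *m C =
  phi2 (invmx y1) *m (phi1 (invmx y2) *m (phi2 (invmx y3) *m (d *m u *m C))) by rewrite !mulmxA.
rewrite -ET /T /B2 /B1.
by rewrite (mulmxA (phi2 (invmx y3))) phi2_inv // mul1mx (mulmxA (phi1 (invmx y2))) phi1_inv // mul1mx
  mulmxA phi2_inv // mul1mx.
Qed.
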